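(* Consider a full-order cascade system with outer state $S_t\in\mathcal{S}\subseteq\mathbb{R}^n$, inner state $X_t\in\mathcal{X}\subseteq\mathbb{R}^m$, outer input $A_t\in\mathcal{A}\subseteq\mathbb{R}^p$ and inner input $U_t\in\mathcal{U}\subseteq\mathbb{R}^q$, with transition kernel $\mathbb{P}_F$, and a reduced-order model with state $S_t\in\mathcal{S}$, input $(A_t,X_t^\star)\in\mathcal{A}\times\mathcal{X}$ and transition kernel $\mathbb{P}_R$. Let $T>0$ be a horizon, $\mathcal{S}_{\mathrm{safe}}\subset\mathcal{S}$ a safe set, $\delta<1$, and let $\pi_R^\star$ be an optimal policy of the reduced-order constrained problem $\max_\pi J_r^R(\pi)$ subject to $J_c^R(\pi)\le\delta$ (so in particular $J_c^R(\pi_R^\star)\le\delta$). Deploy $\pi_R^\star$ on the full-order system with the inner-loop controller $U_t=K(X_t^\star,X_t)$. Suppose Assumptions (A1)–(A6) below hold. Then $$\mathbb{P}_K\Big(\bigcap_{t=0}^{T}\{S_t\in\mathcal{S}_{\mathrm{safe}}\}\ \Big|\ \pi_R^\star\Big)\ \ge\ 1-\delta-\frac{L}{1-\alpha}\big(e_0+\beta D\big).$$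
   Context: $\Delta(\cdot)$ denotes the set of probability measures. $\mathbb{P}_F:(\mathcal{S}\times\mathcal{X})\times(\mathcal{A}\times\mathcal{U})\to\Delta(\mathcal{S}\times\mathcal{X})$ and $\mathbb{P}_R:\mathcal{S}\times(\mathcal{A}\times\mathcal{X})\to\Delta(\mathcal{S})$. A (reduced-order) policy is a conditional distribution $\pi:\mathcal{S}\to\Delta(\mathcal{A}\times\mathcal{X})$ selecting $(A_t,X_t^\star)$ from $S_t$. With bounded reward $r:\mathcal{S}\times\mathcal{A}\times\mathcal{X}\to\mathbb{R}$, $J_r^R(\pi)=\mathbb{E}_R^\pi[\sum_{t=0}^T r(S_t,A_t,X_t^\star)]$; with cost $c(s)=\mathbf{1}\{s\notin\mathcal{S}_{\mathrm{safe}}\}$, $J_c^R(\pi)=\mathbb{E}_R^\pi[\sum_{t=0}^T c(S_t)]$, expectations taken in the reduced-order model. The closed-loop kernel is $\mathbb{P}_K((S_{t+1},X_{t+1})\mid(S_t,X_t),(A_t,X_t^\star)):=\mathbb{P}_F((S_{t+1},X_{t+1})\mid(S_t,X_t),(A_t,K(X_t^\star,X_t)))$, and its marginal outer-state kernel at time $t$ is $\mathbb{P}_K(s'\mid s,a,x^\star):=\sum_{x,x'\in\mathcal{X}}\mathbb{P}_K((s',x')\mid(s,x),(a,x^\star))\,\mathbb{P}_K(X_t=x)$. The total variation norm is $\|\mu-\nu\|_{TV}=\tfrac12\sum|\mu-\nu|$. For $P\succ0$, $\|v\|_P$ is the $P$-weighted norm. All expectations/probabilities for the full-order system refer to the closed-loop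 process with $\pi_R^\star$ and controller $K$. Assumptions: (A1) Cascade: $\mathbb{P}_F(X_{t+1}\mid S_t=s,X_t=x,A_t=a,U_t=u)=\mathbb{P}_F(X_{t+1}\mid X_t=x,U_t=u)$ for all $(s,x,a,u)$. (A2) Outer matching: $\mathbb{P}_F(S_{t+1}\mid S_t=s,X_t=x,A_t=a,U_t=u)=\mathbb{P}_R(S_{t+1}\mid S_t=s,A_t=a,X_t^\star=x)$ for all $(s,x,a,u)$. (A3) Tracking: with $e_t:=\mathbb{E}[\|X_t-X_t^\star\|_P]$, there exist $P\in\mathbb{S}^{m\times m}_{++}$, $\alpha\in(0,1)$, $\beta>0$ such that $e_t\le\alpha e_{t-1}+\beta\,\mathbb{E}[\|X_t^\star-X_{t-1}^\star\|_P]$ for all $t\ge1$. (A4) Reference variation: there exist nonnegative $d_1,\dots,d_T$ and $D>0$ with $\mathbb{E}[\|X_t^\star-X_{t-1}^\star\|_P]\le d_t$ for all $t\ge1$ and $\sum_{t=1}^T d_t\le D$. (A5) The initial outer-state distributions of the reduced-order and closed-loop full-order systems coincide. (A6) There is $L>0$ with $\|\mathbb{P}_R(\cdot\mid s,a,x')-\mathbb{P}_R(\cdot\mid s,a,x)\|_{TV}\le L\|x'-x\|_P$ for all $s,a,x,x'$. *)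

(* Defs.v *)
(* finite (discrete) spaces, reals given by a realType. *)
From HB Require Import structures.
From mathcomp Require Import all_boot all_order all_algebra.
From mathcomp Require Import reals.
Set Implicit Arguments. Unset Strict Implicit. Unset Printing Implicit Defensive.
Import Order.TTheory GRing.Theory Num.Theory.
Local Open Scope ring_scope.

Section Defs.
Variable R : realType.

Definition isdist (T : finType) (f : {ffun T -> R}) : Prop :=
  (forall x, 0 <= f x) /\ \sum_x f x = 1.

Definition tvnorm (T : finType) (mu nu : {ffun T -> R}) : R :=
  2^-1 * \sum_x `|mu x - nu x|.

Definition posdef (m : nat) (P : 'M[R]_m) : Prop :=
  P^T = P /\ forall v : 'cV[R]_m, v != 0 -> 0 < (v^T *m P *m v) 0 0.

Definition pnorm (m : nat) (P : 'M[R]_m) (v : 'cV[R]_m) : R :=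
  Num.sqrt ((v^T *m P *m v) 0 0).

Variables (S A X U : finType) (T : nat).

Definition tcur (t : 'I_T) : 'I_T.+1 := widen_ord (leqnSn T) t.
Definition tnext (t : 'I_T) : 'I_T.+1 := lift ord0 t.

Definition ftraj := {ffun 'I_T.+1 -> S * X * A * X}.
Definition fS (tau : ftraj) t : S := (tau t).1.1.1.
Definition fX (tau : ftraj) t : X := (tau t).1.1.2.
Definition fA (tau : ftraj) t : A := (tau t).1.2.
Definition fXs (tau : ftraj) t : X := (tau t).2.

Definition fweight (nu0 : {ffun S * X -> R}) (pi : S -> {ffun A * X -> R})
  (K : X -> X -> U) (PF : S -> X -> A -> U -> {ffun S * X -> R}) (tau : ftraj) : R :=
  nu0 (fS tau ord0, fX tau ord0) *
  (\prod_(t < T.+1) pi (fS tau t) (fA tau t, fXs tau t)) *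
  \prod_(t < T) PF (fS tau (tcur t)) (fX tau (tcur t)) (fA tau (tcur t))
                   (K (fXs tau (tcur t)) (fX tau (tcur t)))
                   (fS tau (tnext t), fX tau (tnext t)).

Definition fexp nu0 pi K PF (f : ftraj -> R) : R :=
  \sum_(tau : ftraj) fweight nu0 pi K PF tau * f tau.

Definition fsafeprob nu0 pi K PF (Ssafe : {set S}) : R :=
  \sum_(tau : ftraj | [forall t, fS tau t \in Ssafe]) fweight nu0 pi K PF tau.

Definition rtraj := {ffun 'I_T.+1 -> S * A * X}.
Definition rS (tau : rtraj) t : S := (tau t).1.1.
Definition rA (tau : rtraj) t : A := (tau t).1.2.
Definition rXs (tau : rtraj) t : X := (tau t).2.

Definition rweight (mu0 : {ffun S -> R}) (pi : S -> {ffun A * X -> R})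
  (PR : S -> A -> X -> {ffun S -> R}) (tau : rtraj) : R :=
  mu0 (rS tau ord0) *
  (\prod_(t < T.+1) pi (rS tau t) (rA tau t, rXs tau t)) *
  \prod_(t < T) PR (rS tau (tcur t)) (rA tau (tcur t)) (rXs tau (tcur t)) (rS tau (tnext t)).

Definition rexp mu0 pi PR (f : rtraj -> R) : R :=
  \sum_(tau : rtraj) rweight mu0 pi PR tau * f tau.

Definition JrR mu0 pi PR (r : S -> A -> X -> R) : R :=
  rexp mu0 pi PR (fun tau => \sum_(t < T.+1) r (rS tau t) (rA tau t) (rXs tau t)).
Definition JcR mu0 pi PR (Ssafe : {set S}) : R :=
  rexp mu0 pi PR (fun tau => \sum_(t < T.+1) (if rS tau t \in Ssafe then 0 else 1)).

End Defs.

(* Main.v *)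
Require Import Defs.
From HB Require Import structures.
From mathcomp Require Import all_boot all_order all_algebra.
From mathcomp Require Import reals.
From mathcomp Require Import ring lra zify.
Import Order.TTheory GRing.Theory Num.Theory.
Local Open Scope ring_scope.
Set Implicit Arguments. Unset Strict Implicit. Unset Printing Implicit Defensive.

Section Chain.
Variables (R : realType) (Z : finType) (nu : Z -> R) (Q : Z -> Z -> R).

Fixpoint Mk (g : nat -> Z -> R) (t : nat) {struct t} : Z -> R :=
  if t is t'.+1 then fun z' => \sum_z Mk g t' z * g t' z * Q z z' else nu.

Definition cw T (tau : {ffun 'I_T.+1 -> Z}) : R :=
  nu (tau ord0) * \prod_(t < T) Q (tau (tcur t)) (tau (tnext t)).

Definition fcons T (sg : {ffun 'I_T.+1 -> Z}) (z : Z) : {ffun 'I_T.+2 -> Z} :=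
  [ffun i => if unlift ord_max i is Some j then sg j else z].
Definition finit T (tau : {ffun 'I_T.+2 -> Z}) : {ffun 'I_T.+1 -> Z} :=
  [ffun j => tau (lift ord_max j)].

Lemma fcons_lift T sg z (j : 'I_T.+1) : fcons sg z (lift ord_max j) = sg j.
Proof. by rewrite ffunE liftK. Qed.
Lemma fcons_widen T sg z (j : 'I_T.+1) : fcons sg z (widen_ord (leqnSn _) j) = sg j.
Proof.
have -> : widen_ord (leqnSn _) j = lift ord_max j by apply: val_inj => /=; rewrite /bump leqNgt ltn_ord.
exact: fcons_lift.
Qed.
Lemma fcons_max T sg z : fcons (T:=T) sg z ord_max = z.
Proof. by rewrite ffunE unlift_none. Qed.

Lemma sum_fcons T (F : {ffun 'I_T.+2 -> Z} -> R) :
  \sum_tau F tau = \sum_sg \sum_z F (fcons sg z).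
Proof.
rewrite pair_big /=.
apply: (reindex (fun p : {ffun 'I_T.+1 -> Z} * Z => fcons p.1 p.2)).
exists (fun tau => (finit tau, tau ord_max)) => [[sg z] _|tau _] /=.
  congr pair; last exact: fcons_max.
  by apply/ffunP => j; rewrite ffunE fcons_lift.
apply/ffunP => i; rewrite ffunE; case: unliftP => [j ->|->] //.
by rewrite ffunE.
Qed.

Lemma sum_ffun1 (F : Z -> R) :
  \sum_(tau : {ffun 'I_1 -> Z}) F (tau ord0) = \sum_z F z.
Proof.
rewrite (reindex (fun z : Z => [ffun _ : 'I_1 => z])) /=.
  by apply: eq_bigr => z _; rewrite ffunE.
exists (fun tau : {ffun 'I_1 -> Z} => tau ord0) => [z _|tau _] /=.
  by rewrite ffunE.
by apply/ffunP => i; rewrite ffunE (ord1 i).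
Qed.

Lemma Mk_ext (g g' : nat -> Z -> R) n :
  (forall t, (t < n)%N -> g t =1 g' t) -> Mk g n =1 Mk g' n.
Proof.
elim: n => [//|n IH] H z /=.
apply: eq_bigr => y _; rewrite IH ?H //.
by move=> t Ht; apply: H; apply: ltnW.
Qed.

Lemma chainF T (g : nat -> Z -> R) :
  \sum_(tau : {ffun 'I_T.+1 -> Z}) cw tau * \prod_(t < T.+1) g t (tau t)
  = \sum_z Mk g T z * g T z.
Proof.
elim: T g => [|T IH] g.
  rewrite /cw /=.
  under eq_bigr => tau _ do rewrite big_ord0 big_ord1 mulr1.
  by rewrite (sum_ffun1 (fun z => nu z * g 0%N z)).
pose g' := fun t => if t == T then (fun y => g T y * \sum_z Q y z * g T.+1 z) else g t.
have E1 : forall sg : {ffun 'I_T.+1 -> Z},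
  \sum_z cw (fcons sg z) * \prod_(t < T.+2) g t (fcons sg z t)
  = cw sg * \prod_(t < T.+1) g' t (sg t).
  move=> sg.
  rewrite /cw [X in _ = _ * X]big_ord_recr /= /g' eqxx.
  have -> : (ord0 : 'I_T.+2) = widen_ord (leqnSn _) ord0 by apply: val_inj.
  under eq_bigr => z _.
    rewrite fcons_widen [X in _ * X * _]big_ord_recr [X in _ * X]big_ord_recr /= fcons_max.
    have -> : tcur (ord_max : 'I_T.+1) = widen_ord (leqnSn _) ord_max by apply: val_inj.
    have -> : tnext (ord_max : 'I_T.+1) = ord_max by apply: val_inj.
    rewrite fcons_widen fcons_max.
    under eq_bigr => t _.
      have -> : tcur (widen_ord (leqnSn _) t) = widen_ord (leqnSn _) (tcur t) by apply: val_inj.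
      have -> : tnext (widen_ord (leqnSn _) t) = widen_ord (leqnSn _) (tnext t) by apply: val_inj.
      rewrite !fcons_widen.
    over.
    have -> : \prod_(i < T.+1) g i (fcons sg z (widen_ord (leqnSn T.+1) i))
            = \prod_(i < T.+1) g i (sg i) by apply: eq_bigr => i _; rewrite fcons_widen.
  over.
  rewrite /=.
  have -> : \prod_(i < T) g' (widen_ord (leqnSn T) i) (sg (widen_ord (leqnSn T) i))
          = \prod_(i < T) g (widen_ord (leqnSn T) i) (sg (widen_ord (leqnSn T) i)).
    apply: eq_bigr => i _; rewrite /g' /=.
    by have := ltn_ord i; case: eqP => // ->; rewrite ltnn.
  under eq_bigr do rewrite [\prod_(i < T.+1) g i (sg i)]big_ord_recr.
  rewrite !mulr_sumr; apply: eq_bigr => z _ /=; ring.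
rewrite sum_fcons.
under eq_bigr do rewrite E1.
rewrite IH.
have HM : Mk g' T =1 Mk g T.
  apply: Mk_ext => t Ht y; rewrite /g'.
  by case: eqP Ht => // ->; rewrite ltnn.
under eq_bigr do rewrite HM /g' eqxx.
rewrite /=.
under [in RHS]eq_bigr do rewrite mulr_suml.
rewrite exchange_big /=; apply: eq_bigr => y _.
rewrite !mulr_sumr; apply: eq_bigr => z _; ring.
Qed.

Hypothesis Qst : forall z, \sum_z' Q z z' = 1.

Lemma Mk_mass (g : nat -> Z -> R) t :
  \sum_z Mk g t.+1 z = \sum_z Mk g t z * g t z.
Proof.
rewrite /= exchange_big /=; apply: eq_bigr => z _.
by rewrite -mulr_sumr Qst mulr1.
Qed.

Lemma marginal T (i : 'I_T.+1) (h : Z -> R) :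
  \sum_(tau : {ffun 'I_T.+1 -> Z}) cw tau * h (tau i)
  = \sum_z Mk (fun _ _ => 1) i z * h z.
Proof.
pose g := fun t : nat => if t == i then h else fun _ => 1.
have Hp : forall tau : {ffun 'I_T.+1 -> Z}, \prod_(t < T.+1) g t (tau t) = h (tau i).
  move=> tau; rewrite (bigD1 i) //= /g eqxx big1 ?mulr1 // => j Hj.
  by have /negbTE -> : (j : nat) != i.
under eq_bigr do rewrite -Hp.
rewrite chainF.
have HM : Mk g i =1 Mk (fun _ _ => 1) i.
  apply: Mk_ext => t Ht y; rewrite /g.
  by case: eqP Ht => // ->; rewrite ltnn.
have Hj : forall j, \sum_z Mk g (i + j) z * g (i + j)%N z = \sum_z Mk (fun _ _ => 1) i z * h z.
  elim => [|j IH].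
    rewrite addn0; apply: eq_bigr => z _; by rewrite HM /g eqxx.
  rewrite -IH addnS -[RHS]Mk_mass.
  apply: eq_bigr => z _; rewrite /g.
  case: eqP => [E|_]; last by rewrite mulr1.
  by move: E; lia.
by rewrite -(Hj (T - i)%N) subnKC // -ltnS.
Qed.

Lemma Mk_ge0 (g : nat -> Z -> R) t z :
  (forall z, 0 <= nu z) -> (forall z z', 0 <= Q z z') -> (forall t z, 0 <= g t z) ->
  0 <= Mk g t z.
Proof.
move=> H0 H1 H2; elim: t z => [|t IH] z //=.
by apply: sumr_ge0 => y _; rewrite !mulr_ge0.
Qed.

Lemma Mk_le (g g' : nat -> Z -> R) t z :
  (forall z, 0 <= nu z) -> (forall z z', 0 <= Q z z') -> (forall t z, 0 <= g t z) ->
  (forall t z, g t z <= g' t z) -> Mk g t z <= Mk g' t z.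
Proof.
move=> H0 H1 H2 H3; elim: t z => [|t IH] z //=.
apply: ler_sum => y _; apply: ler_wpM2r => //.
apply: ler_pM => //; first exact: Mk_ge0.
Qed.

End Chain.

Section Misc.
Variable R : realType.

Lemma sum_pair (T1 T2 : finType) (F : T1 * T2 -> R) :
  \sum_z F z = \sum_a \sum_b F (a, b).
Proof. by rewrite pair_big /=; apply: eq_bigr => -[]. Qed.

Lemma sum_assoc (T1 T2 T3 : finType) (F : T1 * T2 * T3 -> R) :
  \sum_z F z = \sum_a \sum_(p : T2 * T3) F ((a, p.1), p.2).
Proof.
rewrite sum_pair sum_pair; apply: eq_bigr => a _.
rewrite sum_pair; apply: eq_bigr => b _; by [].
Qed.

Lemma tv_bound (S : finType) (mu nu : {ffun S -> R}) (u : S -> R) :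
  isdist mu -> isdist nu -> (forall s, 0 <= u s <= 1) ->
  `|\sum_s (nu s - mu s) * u s| <= tvnorm mu nu.
Proof.
move=> [_ Hm] [_ Hn] Hu.
have -> : \sum_s (nu s - mu s) * u s = \sum_s (nu s - mu s) * (u s - 2^-1).
  rewrite [RHS](eq_bigr (fun s => (nu s - mu s) * u s - (nu s - mu s) * 2^-1)); last first.
    by move=> s _; rewrite mulrBr.
  by rewrite sumrB -mulr_suml sumrB Hm Hn subrr mul0r subr0.
rewrite /tvnorm mulr_sumr; apply: le_trans (ler_norm_sum _ _ _) _.
apply: ler_sum => s _; rewrite normrM distrC mulrC.
apply: ler_wpM2r => //.
have := Hu s; rewrite ler_norml => /andP [H1 H2].
apply/andP; split; lra.
Qed.

Lemma prod_sf (I : finType) (S : finType) (Sf : {set S}) (F : I -> S) :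
  \prod_i (if F i \in Sf then 1 else 0 : R) = if [forall i, F i \in Sf] then 1 else 0.
Proof.
case: forallP => [H|/forallP]; first by apply: big1 => i _; rewrite H.
rewrite negb_forall => /existsP [i Hi].
by rewrite (bigD1 i) //= (negbTE Hi) mul0r.
Qed.

Lemma one_sub_prod (I : finType) (S : finType) (Sf : {set S}) (F : I -> S) :
  1 - \prod_i (if F i \in Sf then 1 else 0 : R) <= \sum_i (if F i \in Sf then 0 else 1).
Proof.
rewrite prod_sf.
case: forallP => [H|/forallP].
  by rewrite subrr; apply: sumr_ge0 => i _; case: ifP.
rewrite negb_forall => /existsP [i Hi].
rewrite (bigD1 i) //= (negbTE Hi) subr0 lerDl.
by apply: sumr_ge0 => j _; case: ifP.
Qed.


Lemma avg01 (I : finType) (w u : I -> R) :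
  (forall i, 0 <= w i) -> \sum_i w i = 1 -> (forall i, 0 <= u i <= 1) ->
  0 <= \sum_i w i * u i <= 1.
Proof.
move=> Hw Hs Hu; apply/andP; split.
  by apply: sumr_ge0 => i _; apply: mulr_ge0 => //; case/andP: (Hu i).
rewrite -Hs; apply: ler_sum => i _; rewrite -[leRHS]mulr1.
by apply: ler_wpM2l => //; case/andP: (Hu i).
Qed.

End Misc.

Fixpoint Wv (R : realType) (S A X : finType) (sf : S -> R)
  (PR : S -> A -> X -> {ffun S -> R}) (pi : S -> {ffun A * X -> R}) (n : nat)
  : S -> A -> X -> R :=
  if n is n'.+1 then fun s a x =>
    sf s * \sum_s' PR s a x s' * \sum_(p : A * X) pi s' p * Wv sf PR pi n' s' p.1 p.2
  else fun s _ _ => sf s.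

Definition Uv (R : realType) (S A X : finType) (sf : S -> R)
  (PR : S -> A -> X -> {ffun S -> R}) (pi : S -> {ffun A * X -> R}) n s :=
  \sum_(p : A * X) pi s p * Wv sf PR pi n s p.1 p.2.

Theorem theorem1
  (R : realType) (n m p q : nat) (S A X U : finType)
  (se : S -> 'cV[R]_n) (ae : A -> 'cV[R]_p) (xe : X -> 'cV[R]_m) (ue : U -> 'cV[R]_q)
  (se_inj : injective se) (ae_inj : injective ae)
  (xe_inj : injective xe) (ue_inj : injective ue)
  (PF : S -> X -> A -> U -> {ffun S * X -> R})
  (PR : S -> A -> X -> {ffun S -> R})
  (PF_dist : forall s x a u, isdist (PF s x a u))
  (PR_dist : forall s a x, isdist (PR s a x))
  (T : nat) (T_pos : (0 < T)%N)
  (Ssafe : {set S}) (delta : R) (delta_lt1 : delta < 1)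
  (r : S -> A -> X -> R)
  (mu0 : {ffun S -> R}) (mu0_dist : isdist mu0)
  (nu0 : {ffun S * X -> R}) (nu0_dist : isdist nu0)
  (K : X -> X -> U)
  (pistar : S -> {ffun A * X -> R}) (pistar_dist : forall s, isdist (pistar s))
  (* pistar is an optimal policy of the reduced-order constrained problem *)
  (pistar_feas : JcR T mu0 pistar PR Ssafe <= delta)
  (pistar_opt : forall pi : S -> {ffun A * X -> R},
      (forall s, isdist (pi s)) -> JcR T mu0 pi PR Ssafe <= delta ->
      JrR T mu0 pi PR r <= JrR T mu0 pistar PR r)
  (* (A1) cascade *)
  (A1 : forall s s' x a a' u x',
      \sum_(s'' : S) PF s x a u (s'', x') = \sum_(s'' : S) PF s' x a' u (s'', x'))
  (* (A2) outer matching *)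
  (A2 : forall s x a u s',
      \sum_(x' : X) PF s x a u (s', x') = PR s a x s')
  (* (A3) tracking *)
  (P : 'M[R]_m) (alpha beta : R)
  (P_pd : posdef P) (alpha_pos : 0 < alpha) (alpha_lt1 : alpha < 1) (beta_pos : 0 < beta)
  (A3 : forall t : 'I_T,
      fexp nu0 pistar K PF
        (fun tau => pnorm P (xe (fX tau (tnext t)) - xe (fXs tau (tnext t))))
      <= alpha * fexp nu0 pistar K PF
                   (fun tau => pnorm P (xe (fX tau (tcur t)) - xe (fXs tau (tcur t))))
         + beta * fexp nu0 pistar K PF
                   (fun tau => pnorm P (xe (fXs tau (tnext t)) - xe (fXs tau (tcur t)))))
  (* (A4) reference variation *)
  (d : nat -> R) (D : R) (D_pos : 0 < D)
  (d_nonneg : forall t, (1 <= t <= T)%N -> 0 <= d t)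
  (A4_var : forall t : 'I_T,
      fexp nu0 pistar K PF
        (fun tau => pnorm P (xe (fXs tau (tnext t)) - xe (fXs tau (tcur t)))) <= d t.+1)
  (A4_sum : \sum_(t < T) d t.+1 <= D)
  (* (A5) same initial outer-state distribution *)
  (A5 : forall s, \sum_(x : X) nu0 (s, x) = mu0 s)
  (* (A6) Lipschitz reduced-order kernel *)
  (L : R) (L_pos : 0 < L)
  (A6 : forall s a x x', tvnorm (PR s a x') (PR s a x) <= L * pnorm P (xe x' - xe x)) :
  let e0 := fexp nu0 pistar K PF
              (fun tau : ftraj S A X T => pnorm P (xe (fX tau ord0) - xe (fXs tau ord0))) in
  fsafeprob T nu0 pistar K PF Ssafe >= 1 - delta - L / (1 - alpha) * (e0 + beta * D).
Proof.
cbv zeta; set e0 := fexp nu0 pistar K PF _.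
pose sf := fun s : S => (if s \in Ssafe then 1 else 0 : R).
have sf01 : forall s, 0 <= sf s <= 1 by move=> s; rewrite /sf; case: ifP => _; rewrite ?lexx ?ler01.
pose W := Wv sf PR pistar. pose Uf := Uv sf PR pistar.
have PFge0 : forall s x a u y, 0 <= PF s x a u y by move=> s x a u y; case: (PF_dist s x a u).
have PRge0 : forall s a x y, 0 <= PR s a x y by move=> s a x y; case: (PR_dist s a x).
have pige0 : forall s y, 0 <= pistar s y by move=> s y; case: (pistar_dist s).
have U01of : forall k, (forall s a x, 0 <= W k s a x <= 1) -> forall s, 0 <= Uf k s <= 1.
  move=> k Hk s; apply: avg01; [by [] | by case: (pistar_dist s) | by move=> y; apply: Hk].
have W01 : forall k s a x, 0 <= W k s a x <= 1.
  elim => [|k IH] s a x; first exact: sf01.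
  have H1 := sf01 s.
  have H2 : 0 <= \sum_s' PR s a x s' * Uf k s' <= 1.
    apply: avg01; [by [] | by case: (PR_dist s a x) | exact: U01of].
  case/andP: H1 => H1 H1'; case/andP: H2 => H2 H2'.
  rewrite /W /=; apply/andP; split; first exact: mulr_ge0.
  exact: mulr_ile1.
have U01 : forall k s, 0 <= Uf k s <= 1 by move=> k; apply: U01of.
pose ZF := (S * X * A * X)%type.
pose nuF := fun z : ZF => nu0 (z.1.1.1, z.1.1.2) * pistar z.1.1.1 (z.1.2, z.2).
pose QF := fun z z' : ZF => PF z.1.1.1 z.1.1.2 z.1.2 (K z.2 z.1.1.2) (z'.1.1.1, z'.1.1.2)
                            * pistar z'.1.1.1 (z'.1.2, z'.2).
pose ZR := (S * A * X)%type.
pose nuR := fun z : ZR => mu0 z.1.1 * pistar z.1.1 (z.1.2, z.2).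
pose QR := fun z z' : ZR => PR z.1.1 z.1.2 z.2 z'.1.1 * pistar z'.1.1 (z'.1.2, z'.2).
have wF : forall tau : ftraj S A X T, fweight nu0 pistar K PF tau = cw nuF QF tau.
  move=> tau; rewrite /fweight /cw /QF /= [X in _ = _ * X]big_split /= big_ord_recl /nuF /fS /fX /fA /fXs /tnext.
  ring.
have wR : forall tau : rtraj S A X T, rweight mu0 pistar PR tau = cw nuR QR tau.
  move=> tau; rewrite /rweight /cw /QR /= [X in _ = _ * X]big_split /= big_ord_recl /nuR /rS /rA /rXs /tnext.
  ring.
have nu0ge0 : forall y, 0 <= nu0 y by case: nu0_dist.
have mu0ge0 : forall y, 0 <= mu0 y by case: mu0_dist.
have nuFge0 : forall z, 0 <= nuF z by move=> z; apply: mulr_ge0.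
have QFge0 : forall z z', 0 <= QF z z' by move=> z z'; apply: mulr_ge0.
have nuRge0 : forall z, 0 <= nuR z by move=> z; apply: mulr_ge0.
have QRge0 : forall z z', 0 <= QR z z' by move=> z z'; apply: mulr_ge0.
have pisum : forall s, \sum_(p : A * X) pistar s (p.1, p.2) = 1.
  by move=> s; rewrite -(proj2 (pistar_dist s)); apply: eq_bigr => -[].
have QFst : forall z, \sum_z' QF z z' = 1.
  move=> z; rewrite (sum_assoc (fun z' => QF z z')) /=.
  rewrite -[RHS](proj2 (PF_dist z.1.1.1 z.1.1.2 z.1.2 (K z.2 z.1.1.2))).
  apply: eq_bigr => -[s x] _ /=.
  by rewrite /QF /= -mulr_sumr pisum mulr1.
have QRst : forall z, \sum_z' QR z z' = 1.
  move=> z; rewrite (sum_assoc (fun z' => QR z z')) /=.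
  rewrite -[RHS](proj2 (PR_dist z.1.1 z.1.2 z.2)).
  apply: eq_bigr => s _ /=.
  by rewrite /QR /= -mulr_sumr pisum mulr1.
have cwFge0 : forall tau : ftraj S A X T, 0 <= cw nuF QF tau.
  by move=> tau; apply: mulr_ge0 => //; apply: prodr_ge0.
have cwRge0 : forall tau : rtraj S A X T, 0 <= cw nuR QR tau.
  by move=> tau; apply: mulr_ge0 => //; apply: prodr_ge0.
have stepQF : forall k (z : ZF), \sum_z' QF z z' * W k z'.1.1.1 z'.1.2 z'.2
    = \sum_s' PR z.1.1.1 z.1.2 z.1.1.2 s' * Uf k s'.
  move=> k z.
  rewrite (sum_assoc (fun z' => QF z z' * W k z'.1.1.1 z'.1.2 z'.2)) /= sum_pair.
  apply: eq_bigr => s _; rewrite -(A2 _ _ _ (K z.2 z.1.1.2)) mulr_suml.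
  apply: eq_bigr => x _; rewrite /QF /Uf /Uv /W /= mulr_sumr.
  by apply: eq_bigr => -[a x'] _ /=; rewrite mulrA.
have stepQR : forall k (z : ZR), \sum_z' QR z z' * W k z'.1.1 z'.1.2 z'.2
    = \sum_s' PR z.1.1 z.1.2 z.2 s' * Uf k s'.
  move=> k z.
  rewrite (sum_assoc (fun z' => QR z z' * W k z'.1.1 z'.1.2 z'.2)) /=.
  apply: eq_bigr => s _; rewrite /QR /Uf /Uv /W /= mulr_sumr.
  by apply: eq_bigr => -[a x'] _ /=; rewrite mulrA.
pose gF := fun (_ : nat) (z : ZF) => sf z.1.1.1.
pose hF := fun k => \sum_(z : ZF) Mk nuF QF gF k z * W (T - k)%N z.1.1.1 z.1.2 z.2.
pose gR := fun (_ : nat) (z : ZR) => sf z.1.1.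
pose hR := fun k => \sum_(z : ZR) Mk nuR QR gR k z * W (T - k)%N z.1.1 z.1.2 z.2.
have hR_step : forall k, (k < T)%N -> hR k.+1 = hR k.
  move=> k Hk; rewrite /hR -(subnSK Hk) /=.
  under eq_bigr do rewrite mulr_suml.
  rewrite exchange_big /=; apply: eq_bigr => z _.
  have -> : W (T - k.+1)%N.+1 z.1.1 z.1.2 z.2
      = sf z.1.1 * \sum_z' QR z z' * W (T - k.+1)%N z'.1.1 z'.1.2 z'.2 by rewrite stepQR.
  rewrite !mulr_sumr; apply: eq_bigr => z' _; rewrite /gR; ring.
have hR_const : hR T = hR 0%N.
  have : forall k, (k <= T)%N -> hR k = hR 0%N.
    elim => [//|k IH] Hk; rewrite hR_step //; apply: IH; exact: ltnW.
  by apply.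
pose pn := fun z : ZF => pnorm P (xe z.1.1.2 - xe z.2).
pose E := fun t : 'I_T.+1 => fexp nu0 pistar K PF
            (fun tau => pnorm P (xe (fX tau t) - xe (fXs tau t))).
have gFge0 : forall t z, 0 <= gF t z by move=> t z; case/andP: (sf01 z.1.1.1).
have gFle1 : forall t z, gF t z <= 1 by move=> t z; case/andP: (sf01 z.1.1.1).
have hF_step : forall k : 'I_T, hF k - hF k.+1 <= L * E (tcur k).
  move=> k; have Hk := ltn_ord k.
  rewrite /hF -(subnSK Hk) /=.
  under [X in _ - X]eq_bigr do rewrite mulr_suml.
  rewrite [X in _ - X]exchange_big /= -sumrB.
  apply: (@le_trans _ _ (\sum_z Mk nuF QF (fun _ _ => 1) k z * (L * pn z))).
    apply: ler_sum => z _.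
    have -> : W (T - k.+1)%N.+1 z.1.1.1 z.1.2 z.2
      = sf z.1.1.1 * \sum_s' PR z.1.1.1 z.1.2 z.2 s' * Uf (T - k.+1)%N s' by [].
    have -> : \sum_z' Mk nuF QF gF k z * gF k z * QF z z' * W (T - k.+1)%N z'.1.1.1 z'.1.2 z'.2
      = Mk nuF QF gF k z * (sf z.1.1.1 * \sum_s' PR z.1.1.1 z.1.2 z.1.1.2 s' * Uf (T - k.+1)%N s').
      by rewrite -stepQF !mulr_sumr; apply: eq_bigr => z' _; rewrite /gF; ring.
    rewrite -mulrBr -mulrBr -sumrB.
    under eq_bigr do rewrite -mulrBl.
    have HM0 : 0 <= Mk nuF QF gF k z by apply: Mk_ge0.
    apply: le_trans (ler_wpM2l HM0 (ler_norm _)) _.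
    apply: (@le_trans _ _ (Mk nuF QF gF k z * (L * pn z))).
      apply: ler_wpM2l => //.
      rewrite normrM.
      apply: (@le_trans _ _ (1 * (L * pn z))); last by rewrite mul1r.
      apply: ler_pM => //.
        by rewrite /sf; case: ifP; rewrite ?normr1 ?normr0 ?ler01.
      apply: le_trans (A6 z.1.1.1 z.1.2 z.2 z.1.1.2).
      apply: tv_bound => //; exact: U01.
    apply: ler_wpM2r.
      by apply: mulr_ge0; [exact: ltW | exact: sqrtr_ge0].
    exact: Mk_le.
  under eq_bigr do rewrite mulrCA.
  rewrite -mulr_sumr; apply: ler_wpM2l; first exact: ltW.
  have := marginal nuF QFst (tcur k) pn; rewrite /= => <-.
  rewrite /E /fexp; under [in X in _ <= X]eq_bigr do rewrite wF.
  exact: lexx.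
have h0 : hF 0%N = hR 0%N.
  rewrite /hF /hR subn0 /=.
  rewrite (sum_assoc (fun z : ZF => nuF z * W T z.1.1.1 z.1.2 z.2)) sum_pair.
  rewrite (sum_assoc (fun z : ZR => nuR z * W T z.1.1 z.1.2 z.2)).
  apply: eq_bigr => s _ /=; rewrite /nuF /nuR /=.
  under [RHS]eq_bigr do rewrite -A5 !mulr_suml.
  by rewrite [RHS]exchange_big.
have hT : hF T = fsafeprob T nu0 pistar K PF Ssafe.
  rewrite /hF subnn /=.
  have -> : \sum_(z : ZF) Mk nuF QF gF T z * W 0%N z.1.1.1 z.1.2 z.2
          = \sum_(z : ZF) Mk nuF QF gF T z * gF T z by [].
  rewrite -chainF /fsafeprob [RHS]big_mkcond /=.
  apply: eq_bigr => tau _; rewrite wF /gF.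
  rewrite (prod_sf R Ssafe (fun t => fS tau t)).
  by case: ifP; rewrite ?mulr1 ?mulr0.
have massR : \sum_(tau : rtraj S A X T) rweight mu0 pistar PR tau = 1.
  have := marginal nuR QRst (ord0 : 'I_T.+1) (fun _ => 1); rewrite /= => H.
  under eq_bigr do rewrite wR -[cw _ _ _]mulr1.
  rewrite H; under eq_bigr do rewrite mulr1.
  rewrite -[RHS](proj2 mu0_dist) (sum_assoc nuR).
  by apply: eq_bigr => s _; rewrite /nuR /= -mulr_sumr pisum mulr1.
have hRT : 1 - JcR T mu0 pistar PR Ssafe <= hR T.
  rewrite /hR subnn /=.
  have -> : \sum_(z : ZR) Mk nuR QR gR T z * W 0%N z.1.1 z.1.2 z.2
          = \sum_(z : ZR) Mk nuR QR gR T z * gR T z by [].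
  rewrite -chainF.
  have K1 : \sum_(tau : rtraj S A X T) rweight mu0 pistar PR tau *
              (1 - \prod_(t < T.+1) gR t (tau t)) <= JcR T mu0 pistar PR Ssafe.
    rewrite /JcR /rexp; apply: ler_sum => tau _.
    apply: ler_wpM2l; first by rewrite wR.
    exact: (one_sub_prod R Ssafe (fun t => rS tau t)).
  have K2 : \sum_(tau : rtraj S A X T) rweight mu0 pistar PR tau *
              (1 - \prod_(t < T.+1) gR t (tau t))
            = 1 - \sum_tau cw nuR QR tau * \prod_(t < T.+1) gR t (tau t).
    rewrite -[X in _ = X - _]massR -sumrB; apply: eq_bigr => tau _.
    by rewrite mulrBr mulr1 wR.
  rewrite K2 in K1; lra.
have tel : hF 0%N - hF T = \sum_(k < T) (hF k - hF k.+1).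
  have := telescope_sumr hF (leq0n T); rewrite big_mkord => H.
  rewrite -opprB -H -sumrN; apply: eq_bigr => k _; by rewrite opprB.
have tsum : hF 0%N - hF T <= L * \sum_(k < T) E (tcur k).
  by rewrite tel mulr_sumr; apply: ler_sum => k _; exact: hF_step.
have Enn : forall t, 0 <= E t.
  move=> t; rewrite /E /fexp; apply: sumr_ge0 => tau _; apply: mulr_ge0.
    by rewrite wF.
  exact: sqrtr_ge0.
have hs : \sum_(k < T) E (tcur k) + E ord_max = e0 + \sum_(k < T) E (tnext k).
  by rewrite /tcur /tnext -big_ord_recr big_ord_recl.
pose V := fun t : 'I_T => fexp nu0 pistar K PF
        (fun tau => pnorm P (xe (fXs tau (tnext t)) - xe (fXs tau (tcur t)))).
have hA3 : \sum_(k < T) E (tnext k) <= alpha * \sum_(k < T) E (tcur k) + beta * \sum_(k < T) V k.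
  rewrite !mulr_sumr -big_split /=; apply: ler_sum => k _; exact: A3 k.
have hV : \sum_(k < T) V k <= D.
  apply: le_trans A4_sum; apply: ler_sum => k _; exact: A4_var k.
have hV' : beta * \sum_(k < T) V k <= beta * D by apply: ler_wpM2l => //; exact: ltW.
have Sc_bound : (\sum_(k < T) E (tcur k)) * (1 - alpha) <= e0 + beta * D.
  have := Enn ord_max; rewrite mulrBr mulr1; lra.
have Sc_bound' : L * \sum_(k < T) E (tcur k) <= L / (1 - alpha) * (e0 + beta * D).
  have -> : L / (1 - alpha) * (e0 + beta * D) = L * ((e0 + beta * D) / (1 - alpha)) by ring.
  apply: ler_wpM2l; first exact: ltW.
  by rewrite ler_pdivlMr ?subr_gt0.
rewrite -hT; move: tsum; rewrite h0 -hR_const => tsum.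
lra.
Qed.
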